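(* Let $(V,\Omega)$ be a finite-dimensional real symplectic vector space and let $\theta^0$ be the one-form on $V$ given by $\theta^0_z(v_z)=\frac{1}{2}\Omega(z,v)$ for $z,v\in V$. Then the group ${\rm Aut}(V,\theta^0)$ of all diffeomorphisms $g:V\to V$ with $g^*\theta^0=\theta^0$ equals the linear symplectic group ${\rm Sp}(V,\Omega)$.
   Context: $V$ is a finite-dimensional real vector space and $\Omega$ is a nonsingular alternating bilinear form on $V$. For $z,v\in V$, $v_z\in T_zV$ denotes the tangent vector at $z$ corresponding to $v$ under the canonical identification $T_zV\cong V$ (i.e. $v_z\psi=\frac{d}{dt}\psi(z+tv)|_{t=0}$). For a smooth map $g:V\to V$ and a one-form $\theta$, $(g^*\theta)_z(v_z)=\theta_{g(z)}((g'_z v)_{g(z)})$, where $g'_z$ is the derivative of $g$ at $z$. ${\rm Sp}(V,\Omega)$ is the group of linear automorphisms $g$ of $V$ with $\Omega(gx,gy)=\Omega(x,y)$ for all $x,y\in V$. *)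

(* Defs.v *)
From HB Require Import structures.
From mathcomp Require Import all_boot all_order all_algebra.
From mathcomp Require Import all_classical all_reals all_analysis.
Set Implicit Arguments. Unset Strict Implicit. Unset Printing Implicit Defensive.
Import Order.TTheory GRing.Theory Num.Theory.
Import numFieldNormedType.Exports.
Local Open Scope ring_scope.

Section Defs.
Variables (R : realType) (n : nat).
Local Notation V := 'rV[R]_n.

Fixpoint iter_dir (f : V -> V) (vs : seq V) : V -> V :=
  match vs with
  | [::] => f
  | v :: vs' => fun x => derive (iter_dir f vs') x v
  end.

Definition smooth (f : V -> V) : Prop :=
  forall vs : seq V, continuous (iter_dir f vs) /\
    forall (x v : V), derivable (iter_dir f vs) x v.

Definition diffeomorphism (g : V -> V) : Prop :=
  exists h : V -> V, [/\ cancel g h, cancel h g, smooth g & smooth h].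

Definition symplectic_form (Om : V -> V -> R) : Prop :=
  [/\ forall y, linear (fun x => Om x y),
      forall x, linear (Om x),
      forall x, Om x x = 0
    & forall x, (forall y, Om x y = 0) -> x = 0].

(* one-forms: theta z v = theta_z(v_z) *)
Definition theta0 (Om : V -> V -> R) : V -> V -> R :=
  fun z v => 2^-1 * Om z v.

Definition pullback (g : V -> V) (theta : V -> V -> R) : V -> V -> R :=
  fun z v => theta (g z) ('D_v g z).

Definition Aut_theta (Om : V -> V -> R) (g : V -> V) : Prop :=
  diffeomorphism g /\ pullback g (theta0 Om) = theta0 Om.

Definition Sp (Om : V -> V -> R) (g : V -> V) : Prop :=
  [/\ linear g, bijective g & forall x y, Om (g x) (g y) = Om x y].

End Defs.

(* Main.v *)
Require Import Defs.
From HB Require Import structures.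
From mathcomp Require Import all_boot all_order all_algebra.
From mathcomp Require Import all_classical all_reals all_analysis.
From mathcomp Require Import ring lra.
Set Implicit Arguments. Unset Strict Implicit. Unset Printing Implicit Defensive.
Import Order.TTheory GRing.Theory Num.Theory.
Import numFieldNormedType.Exports.
Local Open Scope ring_scope.
Section Form.
Variables (R : realType) (n : nat) (Om : 'rV[R]_n -> 'rV[R]_n -> R).
Local Notation V := 'rV[R]_n.
Hypothesis Hl : forall y, linear (fun x => Om x y).
Hypothesis Hr : forall x, linear (Om x).
Hypothesis Halt : forall x, Om x x = 0.

Lemma OmDl x z y : Om (x + z) y = Om x y + Om z y.
Proof. by have := Hl y 1 x z; rewrite scale1r => ->; rewrite scale1r. Qed.
Lemma OmDr x z y : Om y (x + z) = Om y x + Om y z.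
Proof. by have := Hr y 1 x z; rewrite scale1r => ->; rewrite scale1r. Qed.
Lemma Om0l y : Om 0 y = 0.
Proof. by have := Hl y (-1) y y; rewrite scaleN1r addNr => ->; rewrite scaleN1r addNr. Qed.
Lemma Om0r y : Om y 0 = 0.
Proof. by have := Hr y (-1) y y; rewrite scaleN1r addNr => ->; rewrite scaleN1r addNr. Qed.
Lemma OmZl a x y : Om (a *: x) y = a * Om x y.
Proof. by have := Hl y a x 0; rewrite addr0 => ->; rewrite Om0l addr0. Qed.
Lemma OmZr a x y : Om y (a *: x) = a * Om y x.
Proof. by have := Hr y a x 0; rewrite addr0 => ->; rewrite Om0r addr0. Qed.
Lemma OmNl x y : Om (- x) y = - Om x y.
Proof. by rewrite -scaleN1r OmZl mulN1r. Qed.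
Lemma OmNr x y : Om y (- x) = - Om y x.
Proof. by rewrite -scaleN1r OmZr mulN1r. Qed.
Lemma OmBl x z y : Om (x - z) y = Om x y - Om z y.
Proof. by rewrite OmDl OmNl. Qed.
Lemma OmBr x z y : Om y (x - z) = Om y x - Om y z.
Proof. by rewrite OmDr OmNr. Qed.
Lemma Om_skew x y : Om x y = - Om y x.
Proof.
have := Halt (x + y); rewrite OmDl !OmDr !Halt add0r addr0 => /eqP.
by rewrite addr_eq0 => /eqP.
Qed.
Lemma Om_suml I (r : seq I) (P : pred I) (F : I -> V) y :
  Om (\sum_(i <- r | P i) F i) y = \sum_(i <- r | P i) Om (F i) y.
Proof. exact: (big_morph (fun x => Om x y) (fun a b => OmDl a b y) (Om0l y)). Qed.
Lemma Om_sumr I (r : seq I) (P : pred I) (F : I -> V) y :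
  Om y (\sum_(i <- r | P i) F i) = \sum_(i <- r | P i) Om y (F i).
Proof. exact: (big_morph (Om y) (fun a b => OmDr a b y) (Om0r y)). Qed.

Definition J : 'M[R]_n := \matrix_(i, j) Om 'e_i 'e_j.

Lemma OmE x y : Om x y = \sum_i \sum_j x 0 i * y 0 j * J i j.
Proof.
rewrite {1}(row_sum_delta x) Om_suml; apply: eq_bigr => i _.
rewrite OmZl {1}(row_sum_delta y) Om_sumr big_distrr; apply: eq_bigr => j _.
by rewrite OmZr mxE /= mulrA.
Qed.

Lemma OmM x y : Om x y = (x *m J *m y^T) 0 0.
Proof.
rewrite OmE exchange_big mxE; apply: eq_bigr => j _; rewrite mxE big_distrl /=.
by apply: eq_bigr => i _; rewrite !mxE /= mulrAC.
Qed.

Hypothesis Hnd : forall x, (forall y, Om x y = 0) -> x = 0.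

Lemma detJ_neq0 : \det J != 0.
Proof.
apply/negP => /det0P [v vn0 vJ]; move/negP: vn0; apply.
by apply/eqP/Hnd => y; rewrite OmM vJ mul0mx mxE.
Qed.

Section SpMap.
Variable L : V -> V.
Hypothesis HL : forall a b, Om (L a) (L b) = Om a b.

Definition Amx : 'M[R]_n := \matrix_(i, j) L 'e_i 0 j.

Lemma AJA : Amx *m J *m Amx^T = J.
Proof.
apply/matrixP => i j; rewrite [RHS]mxE -HL OmM !mxE.
apply: eq_bigr => k _; rewrite !mxE; congr (_ * _).
by apply: eq_bigr => l _; rewrite !mxE.
Qed.

Lemma detA_neq0 : \det Amx != 0.
Proof.
have := congr1 determinant AJA; rewrite !det_mulmx det_tr => E.
apply/eqP => A0; move: E; rewrite A0 !mul0r => /esym/eqP.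
by apply/negP; exact: detJ_neq0.
Qed.

Lemma sp_nondeg w : (forall v, Om w (L v) = 0) -> w = 0.
Proof.
move=> Hw; apply: Hnd => y.
have E : w *m J *m Amx^T = 0.
  apply/matrixP => i j; rewrite (ord1 i) [RHS]mxE -(Hw 'e_j) OmM !mxE.
  by apply: eq_bigr => k _; rewrite !mxE.
have U : Amx^T \in unitmx by rewrite unitmxE det_tr unitfE detA_neq0.
have E2 : w *m J = 0.
  by rewrite -[w *m J]mulmx1 -(mulmxV U) mulmxA E mul0mx.
by rewrite OmM E2 mul0mx mxE.
Qed.

Lemma sp_linear : linear L.
Proof.
move=> a u v; apply/eqP; rewrite -subr_eq0; apply/eqP/sp_nondeg => w.
rewrite !OmBl OmDl OmZl !HL OmDl OmZl.
by rewrite subrr.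
Qed.
End SpMap.
End Form.

Section Calc.
Variables (R : realType) (n : nat).
Local Notation V := 'rV[R]_n.

Lemma line_quot (W : normedModType R) (f : V -> W) p v s :
  (fun h : R => h^-1 *: (((fun r : R => f (p + r *: v)) \o shift s) (h *: 1) - f (p + s *: v)))
  = (fun h : R => h^-1 *: ((f \o shift (p + s *: v)) (h *: v) - f (p + s *: v))).
Proof.
apply: funext => h /=; congr (_ *: (f _ - _)).
by rewrite /shift [h *: 1]mulr1 scalerDl addrCA addrC.
Qed.

Lemma line_derivable (W : normedModType R) (f : V -> W) p v s :
  derivable (fun r : R => f (p + r *: v)) s 1 <-> derivable f (p + s *: v) v.
Proof. by rewrite /derivable line_quot. Qed.

Lemma line_derive (W : normedModType R) (f : V -> W) p v s :
  'D_1 (fun r : R => f (p + r *: v)) s = 'D_v f (p + s *: v).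
Proof. by rewrite /derive line_quot. Qed.

Lemma coord_line (F : V -> V) p v s i :
  derivable F (p + s *: v) v ->
  is_derive s 1 (fun r : R => F (p + r *: v) 0 i) ('D_v F (p + s *: v) 0 i).
Proof.
move=> dF; have dl : derivable (fun r : R => F (p + r *: v)) s 1.
  exact/line_derivable.
have := (derivable_mxP _ _ _).1 dl 0 i => dc.
apply: DeriveDef => //.
by rewrite -line_derive (derive_mx dl) mxE.
Qed.
End Calc.

Section Schwarz.
Variable R : realType.

Lemma mvt2 (f df : R -> R) (h : R) : 0 < h -> (forall x : R, is_derive x 1 f (df x)) ->
  exists2 c, 0 < c < h & f h - f 0 = df c * h.
Proof.
move=> h0 fd; have [|c cI E] := MVT h0 (fun x _ => fd x).
  apply: derivable_within_continuous => x _; exact: ex_derive.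
by exists c; [rewrite in_itv /= in cI|rewrite E subr0].
Qed.

Variables (phi ps pt pst pts : R -> R -> R).
Hypothesis ds : forall s t : R, is_derive s 1 (fun s => phi s t) (ps s t).
Hypothesis dt : forall s t : R, is_derive t 1 (fun t => phi s t) (pt s t).
Hypothesis dst : forall s t : R, is_derive t 1 (fun t => ps s t) (pst s t).
Hypothesis dts : forall s t : R, is_derive s 1 (fun s => pt s t) (pts s t).
Hypothesis cont : forall e, 0 < e -> exists2 d, 0 < d &
  forall s t, `|s| < d -> `|t| < d ->
    `|pst s t - pst 0 0| < e /\ `|pts s t - pts 0 0| < e.

Lemma schwarz : pst 0 0 = pts 0 0.
Proof.
have key : forall e, 0 < e -> `|pst 0 0 - pts 0 0| < e + e.
  move=> e e0; have [d d0 Hd] := cont e0.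
  pose h := d / 2.
  have h0 : 0 < h by rewrite divr_gt0.
  have hd : h < d by rewrite /h ltr_pdivrMr // ltr_pMr // ltr1n.
  have [c1 /andP[c10 c1h] E1] := @mvt2 (fun x => phi x h - phi x 0)
     (fun x => ps x h - ps x 0) h h0 (fun x => is_deriveB (ds x h) (ds x 0)).
  have [c2 /andP[c20 c2h] E2] := @mvt2 (fun t => ps c1 t)
     (fun t => pst c1 t) h h0 (fun t => dst c1 t).
  have [c3 /andP[c30 c3h] E3] := @mvt2 (fun t => phi h t - phi 0 t)
     (fun t => pt h t - pt 0 t) h h0 (fun t => is_deriveB (dt h t) (dt 0 t)).
  have [c4 /andP[c40 c4h] E4] := @mvt2 (fun s => pt s c3)
     (fun s => pts s c3) h h0 (fun s => dts s c3).
  have Eq : pst c1 c2 = pts c4 c3.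
    have : (ps c1 h - ps c1 0) * h = (pt h c3 - pt 0 c3) * h.
      by rewrite -E1 -E3; ring.
    rewrite E2 E4 => /mulIf; rewrite gt_eqF // => /(_ isT) /mulIf.
    by rewrite gt_eqF // => /(_ isT).
  have abs x : 0 < x -> x < h -> `|x| < d.
    by move=> x0 xh; rewrite gtr0_norm // (lt_trans xh hd).
  have [H1 _] := Hd c1 c2 (abs _ c10 c1h) (abs _ c20 c2h).
  have [_ H2] := Hd c4 c3 (abs _ c40 c4h) (abs _ c30 c3h).
  rewrite -(subrKA (pst c1 c2)) (le_lt_trans (ler_normD _ _)) //.
  rewrite ltrD //; first by rewrite distrC.
  by rewrite Eq.
apply/eqP; rewrite -subr_eq0 -normr_eq0; apply/eqP.
apply/eqP; rewrite eq_le normr_ge0 andbT; apply/negP => /negP; rewrite -ltNge => p0.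
have := key _ (divr_gt0 p0 (ltr0n _ 2)).
by rewrite -splitr ltxx.
Qed.
End Schwarz.

Section Cont.
Variables (R : realType) (n : nat).
Local Notation V := 'rV[R]_n.

Lemma cont_line (G : V -> V) x a b j : continuous G ->
  forall e, 0 < e -> exists2 d, 0 < d & forall s t : R, `|s| < d -> `|t| < d ->
   `|G (x + s *: a + t *: b) 0 j - G x 0 j| < e.
Proof.
move=> cG e e0.
have c : {for x, continuous (fun y => G y 0 j)}.
  exact: (continuous_comp (cG x) (@coord_continuous R 1 n 0 j (G x))).
move/cvgrPdist_lt: c => /(_ e e0) /nbhs_ballP [d0 d00 Hb].
have p : 0 < `|a| + `|b| + 1 by rewrite ltr_pwDr // addr_ge0.
exists (d0 / (`|a| + `|b| + 1)); first by rewrite divr_gt0.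
move=> s t hs ht; rewrite distrC; apply: Hb; rewrite -ball_normE /=.
rewrite (_ : x - _ = - (s *: a + t *: b)); last by rewrite -addrA opprD addrA subrr add0r.
rewrite normrN.
apply: (le_lt_trans (ler_normD _ _)); rewrite !normrZ.
set d := d0 / _ in hs ht.
have dE : d * (`|a| + `|b| + 1) = d0 by rewrite /d divfK // gt_eqF.
have := normr_ge0 a; have := normr_ge0 b; have := normr_ge0 s; have := normr_ge0 t.
nra.
Qed.
End Cont.

Section Sym.
Variables (R : realType) (n : nat).
Local Notation V := 'rV[R]_n.
Variable F : V -> V.
Hypothesis sF : smooth F.

Lemma sF_der vs x v : derivable (iter_dir F vs) x v.
Proof. by case: (sF vs). Qed.
Lemma sF_cont vs : continuous (iter_dir F vs).
Proof. by case: (sF vs). Qed.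

Lemma sym2 x a b : iter_dir F [:: b; a] x = iter_dir F [:: a; b] x.
Proof.
apply/matrixP => i j; rewrite (ord1 i).
have E r t : x + r *: a + t *: b = x + t *: b + r *: a by rewrite addrAC.
have := @schwarz R (fun s t => F (x + s *: a + t *: b) 0 j)
  (fun s t => iter_dir F [:: a] (x + s *: a + t *: b) 0 j)
  (fun s t => iter_dir F [:: b] (x + s *: a + t *: b) 0 j)
  (fun s t => iter_dir F [:: b; a] (x + s *: a + t *: b) 0 j)
  (fun s t => iter_dir F [:: a; b] (x + s *: a + t *: b) 0 j).
rewrite !scale0r !addr0; apply.
- move=> s t; rewrite (_ : (fun s => _) = (fun r => F (x + t *: b + r *: a) 0 j)).
    by rewrite E; apply: coord_line; exact: (@sF_der [::]).
  by apply: funext => r; rewrite E.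
- move=> s t; apply: coord_line; exact: (@sF_der [::]).
- move=> s t; apply: coord_line; exact: (@sF_der [:: a]).
- move=> s t; rewrite (_ : (fun s => _) = (fun r => iter_dir F [:: b] (x + t *: b + r *: a) 0 j)).
    by rewrite E; apply: coord_line; exact: (@sF_der [:: b]).
  by apply: funext => r; rewrite E.
- move=> e e0.
  have [d1 d10 H1] := cont_line x a b j (@sF_cont [:: b; a]) e0.
  have [d2 d20 H2] := cont_line x a b j (@sF_cont [:: a; b]) e0.
  exists (Num.min d1 d2); first by rewrite lt_min d10 d20.
  move=> s t; rewrite !lt_min => /andP[s1 s2] /andP[t1 t2]; split.
  + exact: H1.
  + exact: H2.
Qed.
End Sym.

Section Prod.
Variables (R : realType) (n : nat) (Om : 'rV[R]_n -> 'rV[R]_n -> R).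
Local Notation V := 'rV[R]_n.
Hypothesis Hl : forall y, linear (fun x => Om x y).
Hypothesis Hr : forall x, linear (Om x).

Lemma coord_der (f : R -> V) t i : derivable f t 1 ->
  is_derive t 1 (fun s => f s 0 i) ('D_1 f t 0 i).
Proof.
move=> d; apply: DeriveDef; first exact: ((derivable_mxP _ _ _).1 d 0 i).
by rewrite (derive_mx d) mxE.
Qed.

Lemma prod_rule (f k : R -> V) t : derivable f t 1 -> derivable k t 1 ->
  is_derive t 1 (fun s => Om (f s) (k s)) (Om ('D_1 f t) (k t) + Om (f t) ('D_1 k t)).
Proof.
move=> df dk.
have hij i j : is_derive t 1 ((fun s => f s 0 i) * (fun s => k s 0 j) * cst (J Om i j))
   (('D_1 f t 0 i * k t 0 j + f t 0 i * 'D_1 k t 0 j) * J Om i j).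
  apply: is_derive_eq.
  exact: (is_deriveM (is_deriveM (coord_der i df) (coord_der j dk)) (is_derive_cst _ _ _)).
  rewrite scaler0 add0r /cst /=.
  rewrite -[f t 0 i *: _]/(f t 0 i * _) -[k t 0 j *: _]/(k t 0 j * _) -[J Om i j *: _]/(J Om i j * _).
  ring.
have H := is_derive_sum (fun i => is_derive_sum (hij i)).
have -> : (fun s => Om (f s) (k s)) =
   \sum_i \sum_j ((fun s => f s 0 i) * (fun s => k s 0 j) * cst (J Om i j)).
  apply: funext => s; rewrite (OmE Hl Hr) fct_sumE; apply: eq_bigr => i _.
  by rewrite fct_sumE; apply: eq_bigr => j _.
apply: is_derive_eq H _.
rewrite (OmE Hl Hr) (OmE Hl Hr (f t)) -big_split /=; apply: eq_bigr => i _.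
rewrite -big_split /=; apply: eq_bigr => j _.
by rewrite mulrDl.
Qed.
End Prod.

Section Main.
Variables (R : realType) (n : nat) (Om : 'rV[R]_n -> 'rV[R]_n -> R).
Local Notation V := 'rV[R]_n.
Hypothesis Hl : forall y, linear (fun x => Om x y).
Hypothesis Hr : forall x, linear (Om x).
Hypothesis Halt : forall x, Om x x = 0.
Hypothesis Hnd : forall x, (forall y, Om x y = 0) -> x = 0.
Variable g : V -> V.
Hypothesis sg : smooth g.
Hypothesis Hth : forall z v, Om (g z) ('D_v g z) = Om z v.

Lemma key1 x a b :
  Om ('D_b g x) ('D_a g x) + Om (g x) (iter_dir g [:: b; a] x) = Om b a.
Proof.
have f_d : derivable (fun t : R => g (x + t *: b)) 0 1.
  by apply/line_derivable; exact: (@sF_der _ _ _ sg [::]).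
have k_d : derivable (fun t : R => iter_dir g [:: a] (x + t *: b)) 0 1.
  by apply/line_derivable; exact: (@sF_der _ _ _ sg [:: a]).
have P1 := prod_rule Hl Hr f_d k_d.
have eqf : (fun s : R => Om (g (x + s *: b)) (iter_dir g [:: a] (x + s *: b)))
   = (fun s : R => Om (x + s *: b) (cst a s)) by apply: funext => s; exact: Hth.
rewrite eqf in P1.
have fx_d : derivable (fun t : R => x + t *: b) 0 1.
  by apply/(line_derivable (fun y : V => y)); exact: derivable_id.
have P2 := prod_rule Hl Hr fx_d (@derivable_cst R R^o _ a 0 1).
have := derive_val (is_derive:=P1); rewrite (derive_val (is_derive:=P2)).
rewrite (line_derive g x b 0) (line_derive (iter_dir g [:: a]) x b 0).
rewrite (line_derive (fun y : V => y) x b 0) derive_id derive_cst.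
rewrite (Om0r Hr) addr0 !scale0r !addr0 => <-.
by [].
Qed.

Lemma Dsymp x a b : Om ('D_a g x) ('D_b g x) = Om a b.
Proof.
have E1 := key1 x a b; have E2 := key1 x b a.
rewrite (sym2 sg) in E1.
rewrite (Om_skew Hl Hr Halt b a) (Om_skew Hl Hr Halt ('D_b g x)) in E1.
lra.
Qed.

Lemma Llin x : linear (fun v => 'D_v g x).
Proof. exact: (sp_linear Hl Hr Hnd (Dsymp x)). Qed.

Lemma LZ x t v : 'D_(t *: v) g x = t *: 'D_v g x.
Proof. by have := Llin x t v 0; rewrite addr0 derive0 addr0. Qed.

Lemma euler z : g z = 'D_z g z.
Proof.
apply/eqP; rewrite -subr_eq0; apply/eqP.
apply: (sp_nondeg Hl Hr Hnd (Dsymp z)) => v.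
by rewrite (OmBl Hl) Hth Dsymp subrr.
Qed.

Lemma g0 : g 0 = 0.
Proof. by rewrite euler derive0. Qed.

Section Homog.
Variable z : V.
Variable i : 'I_n.
Let f (t : R) : R := g (t *: z) 0 i.
Let df (t : R) : R := 'D_z g (t *: z) 0 i.

Lemma f_der (t : R) : is_derive t 1 f (df t).
Proof.
have := coord_line i (@sF_der _ _ _ sg [::] (0 + t *: z) z).
by rewrite add0r; under eq_fun do rewrite add0r.
Qed.

Lemma f_euler (t : R) : f t = t * df t.
Proof.
by rewrite /f /df euler LZ mxE.
Qed.

Lemma phi_der (t : R) : 0 < t -> is_derive t 1 (fun s => f s * s^-1) 0.
Proof.
move=> t0; have tn0 : t != 0 by rewrite gt_eqF.
have Hv := is_deriveV tn0 (is_derive_id t 1).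
apply: is_derive_eq (is_deriveM (f_der t) Hv) _.
rewrite f_euler /=.
rewrite -[(t * df t) *: _]/((t * df t) * _) -[t^-1 *: _]/(t^-1 * _).
rewrite -[- t ^- 2 *: 1]/(- t ^- 2 * 1).
field.
by [].
Qed.

Lemma phi_const a b : 0 < a -> a < b -> f a * a^-1 = f b * b^-1.
Proof.
move=> a0 ab.
have pos x : x \in `]a, b[%R -> 0 < x.
  by rewrite in_itv /= => /andP[ax _]; exact: lt_trans a0 ax.
have [|c _ E] := MVT ab (fun x xI => phi_der (pos x xI)).
  apply: derivable_within_continuous => x xI.
  have x0 : 0 < x by apply: lt_le_trans a0 _; move: xI; rewrite in_itv /= => /andP[].
  exact: (ex_derive (is_derive:=phi_der x0)).
by apply/eqP; rewrite eq_sym -subr_eq0 E mul0r.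
Qed.

Lemma homog (t : R) : 0 < t -> f t = t * f 1.
Proof.
move=> t0; have tn0 : t != 0 by rewrite gt_eqF.
suff : f t * t^-1 = f 1 * 1^-1 by rewrite invr1 mulr1 => <-; rewrite mulrC -mulrA mulVf // mulr1.
case: (ltgtP t 1) => [t1|t1|->] //.
- exact: phi_const.
- by apply/esym/phi_const.
Qed.
End Homog.

Lemma homogV z t : 0 < t -> g (t *: z) = t *: g z.
Proof.
move=> t0; apply/matrixP => i j; rewrite (ord1 i) mxE.
by have := homog z j t0; rewrite scale1r.
Qed.

Lemma gL z : g z = 'D_z g 0.
Proof.
rewrite /derive cvg_at_rightE; last exact: (@sF_der _ _ _ sg [::]).
apply/esym/lim_near_cst => //.
near=> h.
have h0 : 0 < h by near: h; exact: nbhs_right_gt.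
rewrite /= /shift addr0 g0 subr0 homogV // scalerA mulVf ?scale1r // gt_eqF.
Unshelve. all: by end_near.
Qed.

Lemma g_lin : linear g.
Proof.
move=> a u v; rewrite !(gL (_ + _)) (gL u) (gL v).
exact: Llin.
Qed.
End Main.

Section Lin.
Variables (R : realType) (n : nat).
Local Notation V := 'rV[R]_n.
Variable f : V -> V.
Hypothesis hf : linear f.

Lemma lin_quot (x v : V) : \forall h \near dnbhs (0 : R),
  h^-1 *: ((f \o shift x) (h *: v) - f x) = f v.
Proof.
near=> h; have hn0 : h != 0 by near: h; exact: nbhs_dnbhs_neq.
by rewrite /= /shift hf addrK scalerA mulVf // scale1r.
Unshelve. all: by end_near.
Qed.

Lemma lin_derivable x v : derivable f x v.
Proof. exact: (is_cvg_near_cst (f v) (lin_quot x v)). Qed.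

Lemma lin_derive x v : 'D_v f x = f v.
Proof. by rewrite /derive; apply: lim_near_cst => //; exact: lin_quot. Qed.

Lemma lin0 : f 0 = 0.
Proof.
have := hf 1 0 0; rewrite !scale1r addr0 => /(congr1 (fun u => u - f 0)).
by rewrite subrr addrK => <-.
Qed.
Lemma linD a b : f (a + b) = f a + f b.
Proof. by rewrite -[a in LHS]scale1r hf scale1r. Qed.
Lemma linZ c a : f (c *: a) = c *: f a.
Proof. by rewrite -[c *: a]addr0 hf lin0 addr0. Qed.

Lemma lin_cont : continuous f.
Proof.
have E : f = \sum_i (fun x : V => x 0 i *: f 'e_i).
  apply: funext => x; rewrite fct_sumE {1}(row_sum_delta x).
  rewrite (big_morph f linD lin0); apply: eq_bigr => i _; exact: linZ.
move=> x; rewrite E; apply: differentiable_continuous.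
apply: differentiable_sum => i; apply: differentiableZl.
exact: (@differentiable_coord R 1 n x 0 i).
Qed.

Lemma iter_lin_cst vs v : exists c, iter_dir f (v :: vs) = fun _ => c.
Proof.
elim: vs v => [|w vs IH] v.
  by exists (f v); apply: funext => x /=; exact: lin_derive.
have [c Ec] := IH w; exists 0.
have -> : iter_dir f [:: v, w & vs] = fun x => derive (iter_dir f (w :: vs)) x v by [].
rewrite Ec; apply: funext => x; exact: (derive_cst c x v).
Qed.

Lemma lin_smooth : smooth f.
Proof.
case=> [|v vs].
  by split; [exact: lin_cont|move=> x v; exact: lin_derivable].
have [c ->] := iter_lin_cst vs v.
by split; [exact: cst_continuous|move=> x w; exact: derivable_cst].
Qed.
End Lin.

Theorem theorem1 (R : realType) (n : nat) (Om : 'rV[R]_n -> 'rV[R]_n -> R) :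
  symplectic_form Om ->
  forall g : 'rV[R]_n -> 'rV[R]_n, Aut_theta Om g <-> Sp Om g.
Proof.
case=> Hl Hr Halt Hnd g; split.
- case=> [[h [gK hK sg sh]] Hpb].
  have Hth z v : Om (g z) ('D_v g z) = Om z v.
    have := congr1 (fun F => F z v) Hpb; rewrite /pullback /theta0 /=.
    by apply: mulfI; rewrite invr_eq0 pnatr_eq0.
  split; first exact: (g_lin Hl Hr Halt Hnd sg Hth).
    by exists h.
  move=> x y; rewrite (gL Hl Hr Halt Hnd sg Hth x) (gL Hl Hr Halt Hnd sg Hth y).
  exact: (Dsymp Hl Hr Halt sg Hth).
- case=> lg [h gK hK] Hp.
  have lh : linear h.
    move=> a u v; apply: (can_inj gK); rewrite hK lg !hK.
    done.
  split.
    exists h; split => //; exact: lin_smooth.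
  apply: funext => z; apply: funext => v.
  by rewrite /pullback /theta0 (lin_derive lg) Hp.
Qed.
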